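(* Let $\ell\in\{0,1,2,\ldots\}$. As $q\to\infty$, $\tilde\gamma_\ell(q)$ has the asymptotic expansion $$\tilde\gamma_\ell(q)\sim\frac{\log^\ell q}{2q}-\frac{\ell\log^{\ell-1}q-\log^\ell q}{4q^2}+\sum_{k=1}^\infty\frac{E_{2k+1}(0)}{2q^{2k+2}(2k+1)!}\sum_{j=0}^{\ell}\binom{\ell}{j}j!\,s(2k+2,j+1)\log^{\ell-j}q .$$
   Context: For $q>0$, $\zeta_E(z,q)=\sum_{n=0}^\infty (-1)^n (n+q)^{-z}$ for $\mathrm{Re}(z)>0$, extended by analytic continuation to an entire function of $z$. The modified Stieltjes constants $\tilde\gamma_k(q)$ are defined by the Taylor expansion $\zeta_E(z,q)=\sum_{k=0}^\infty\frac{(-1)^k\tilde\gamma_k(q)}{k!}(z-1)^k$. $E_n(x)$ is the $n$-th Euler polynomial, defined by $\frac{2e^{xt}}{e^t+1}=\sum_{n\ge0}E_n(x)\frac{t^n}{n!}$. $s(n,k)$ are the (signed) Stirling numbers of the first kind: $x(x-1)\cdots(x-n+1)=\sum_{k=0}^n s(n,k)x^k$. The symbol $\sim$ means asymptotic expansion in the sense of Poincaré (each truncation has error of the order of the first omitted term) as $q\to\infty$. *)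

(* Defs.v *)
From Stdlib Require Import Reals Factorial.
From Coquelicot Require Import Coquelicot.
Open Scope R_scope.

(* Alternating Hurwitz zeta function, for real z > 0 (where the series
   converges); its real restriction determines its Taylor coefficients at 1. *)
Definition zetaE (z q : R) : R :=
  Series (fun n : nat => (-1) ^ n * Rpower (INR n + q) (- z)).

(* Modified Stieltjes constants: zeta_E(z,q) = sum_k (-1)^k g_k(q)/k! (z-1)^k,
   i.e. g_k(q) = (-1)^k * (d/dz)^k zeta_E(z,q) at z = 1. *)
Definition mstieltjes (k : nat) (q : R) : R :=
  (-1) ^ k * Derive_n (fun z => zetaE z q) k 1.

Definition euler_poly (n : nat) (x : R) : R :=
  Derive_n (fun t => 2 * exp (x * t) / (exp t + 1)) n 0.

Fixpoint fallfact (n : nat) (x : R) : R :=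
  match n with
  | O => 1
  | S m => fallfact m x * (x - INR m)
  end.

(* Signed Stirling numbers of the first kind: coefficient of x^k in fallfact n. *)
Definition stirling1 (n k : nat) : R :=
  Derive_n (fallfact n) k 0 / INR (fact k).

Definition asym_term (l k : nat) (q : R) : R :=
  euler_poly (2 * k + 1) 0 / (2 * q ^ (2 * k + 2) * INR (fact (2 * k + 1))) *
  sum_f_R0 (fun j => Binomial.C l j * INR (fact j) * stirling1 (2 * k + 2) (j + 1)
                     * ln q ^ (l - j)) l.

Fixpoint asym_partial (l N : nat) (q : R) : R :=
  match N with
  | O => ln q ^ l / (2 * q) - (INR l * ln q ^ (l - 1) - ln q ^ l) / (4 * q ^ 2)
  | S M => asym_partial l M q + asym_term l (S M) q
  end.

(* Main.v *)
Require Import Defs.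
From Stdlib Require Import Reals Factorial.
From Stdlib Require Import Lra Lia List ZArith FunctionalExtensionality.
From Coquelicot Require Import Coquelicot.
Open Scope R_scope.

Lemma dseq_loc (f : R -> R) (d : nat -> R -> R) (U : R -> Prop) :
  (forall x, U x -> locally x U) ->
  (forall x, U x -> f x = d 0%nat x) ->
  (forall k x, U x -> is_derive (d k) x (d (S k) x)) ->
  forall k x, U x -> Derive_n f k x = d k x.
Proof.
  intros HU H0 Hd k; induction k as [|k IH]; intros x Hx.
  - simpl; auto.
  - simpl. rewrite (Derive_ext_loc _ (d k)).
    + apply is_derive_unique; auto.
    + apply (filter_imp U); auto.
Qed.

Lemma dseq_loc_ex (f : R -> R) (d : nat -> R -> R) (U : R -> Prop) :
  (forall x, U x -> locally x U) ->
  (forall x, U x -> f x = d 0%nat x) ->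
  (forall k x, U x -> is_derive (d k) x (d (S k) x)) ->
  forall k x, U x -> ex_derive_n f k x.
Proof.
  intros HU H0 Hd k x Hx. destruct k as [|k]; simpl; auto.
  apply (ex_derive_ext_loc (d k)).
  - apply (filter_imp U); auto. intros y Hy. symmetry. apply (dseq_loc f d U); auto.
  - eexists; apply Hd; auto.
Qed.

Lemma dseq_glob (f : R -> R) (d : nat -> R -> R) :
  (forall x, f x = d 0%nat x) ->
  (forall k x, is_derive (d k) x (d (S k) x)) ->
  forall k x, Derive_n f k x = d k x /\ ex_derive_n f k x.
Proof.
  intros H0 Hd k x. split.
  - apply (dseq_loc f d (fun _ => True)); auto. intros; apply filter_true.
  - apply (dseq_loc_ex f d (fun _ => True)); auto. intros; apply filter_true.
Qed.

Lemma isd_const (a x : R) : is_derive (fun _ => a) x 0.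
Proof. exact (is_derive_const a x). Qed.
Lemma isd_id (x : R) : is_derive (fun y => y) x 1.
Proof. exact (is_derive_id x). Qed.

Fixpoint pev (p : list R) (y : R) : R :=
  match p with nil => 0 | a :: p' => a + y * pev p' y end.
Fixpoint padd (p q : list R) : list R :=
  match p, q with
  | nil, _ => q
  | _, nil => p
  | a :: p', b :: q' => (a + b) :: padd p' q'
  end.
Fixpoint pder (p : list R) : list R :=
  match p with nil => nil | a :: p' => padd p' (0 :: pder p') end.
Definition pscal (c : R) (p : list R) := map (Rmult c) p.

Lemma pev_add p q y : pev (padd p q) y = pev p y + pev q y.
Proof.
  revert q; induction p as [|a p IH]; intros q; simpl.
  - ring.
  - destruct q as [|b q]; simpl. ring. rewrite IH; ring.
Qed.
Lemma pev_scal c p y : pev (pscal c p) y = c * pev p y.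
Proof. induction p as [|a p IH]; simpl. ring. rewrite IH; ring. Qed.

Lemma nth_padd p q j : nth j (padd p q) 0 = nth j p 0 + nth j q 0.
Proof.
  revert q j; induction p as [|a p IH]; intros q j; simpl.
  - destruct j; ring.
  - destruct q as [|b q]; destruct j; simpl; try ring. rewrite IH; ring.
Qed.
Lemma nth_pscal c p j : nth j (pscal c p) 0 = c * nth j p 0.
Proof.
  revert j; induction p as [|a p IH]; intros j; destruct j; simpl; try ring; auto.
Qed.

Lemma is_derive_pev p y : is_derive (pev p) y (pev (pder p) y).
Proof.
  induction p as [|a p IH]; simpl.
  - apply (isd_const 0).
  - rewrite pev_add. simpl.
    replace (pev p y + (0 + y * pev (pder p) y)) with
      (0 + (1 * pev p y + y * pev (pder p) y)) by ring.
    apply (is_derive_plus (fun _ => a) (fun y => y * pev p y)).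
    apply isd_const.
    apply (is_derive_mult (fun y => y) (pev p)). apply isd_id. exact IH.
    intros; apply Rmult_comm.
Qed.

Lemma nth_pder p j : nth j (pder p) 0 = INR (S j) * nth (S j) p 0.
Proof.
  revert j; induction p as [|a p IH]; intros j; simpl.
  - destruct j; simpl; ring.
  - rewrite nth_padd. destruct j as [|j]. simpl; ring.
    simpl nth. rewrite IH. ring.
Qed.

Fixpoint pder_n (k : nat) (p : list R) : list R :=
  match k with O => p | S k' => pder (pder_n k' p) end.

Lemma Derive_n_pev p k x : Derive_n (pev p) k x = pev (pder_n k p) x.
Proof.
  apply (proj1 (dseq_glob (pev p) (fun k => pev (pder_n k p)) (fun _ => eq_refl)
    (fun k x => is_derive_pev (pder_n k p) x) k x)).
Qed.

Lemma nth_pder_n k p j :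
  nth j (pder_n k p) 0 = INR (fact (j + k)) / INR (fact j) * nth (j + k) p 0.
Proof.
  revert j; induction k as [|k IH]; intros j; simpl.
  - rewrite Nat.add_0_r. field. apply INR_fact_neq_0.
  - rewrite nth_pder, IH. replace (S j + k)%nat with (j + S k)%nat by lia.
    replace (j + S k)%nat with (S (j + k)) by lia.
    rewrite (fact_simpl j), (fact_simpl (j+k)), !mult_INR. field.
    split; [apply INR_fact_neq_0 | apply not_0_INR; lia].
Qed.

Lemma pev_0 p : pev p 0 = nth 0 p 0.
Proof. destruct p; simpl; ring. Qed.

Lemma Derive_n_pev_0 p k : Derive_n (pev p) k 0 = INR (fact k) * nth k p 0.
Proof.
  rewrite Derive_n_pev, pev_0, nth_pder_n. simpl. field.
Qed.

Lemma isd_mult (f g : R -> R) (x df dg : R) :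
  is_derive f x df -> is_derive g x dg ->
  is_derive (fun y => f y * g y) x (df * g x + f x * dg).
Proof. intros H1 H2. apply (is_derive_mult f g x df dg H1 H2). intros; apply Rmult_comm. Qed.
Lemma isd_plus (f g : R -> R) (x df dg : R) :
  is_derive f x df -> is_derive g x dg ->
  is_derive (fun y => f y + g y) x (df + dg).
Proof. intros H1 H2. apply (is_derive_plus f g x df dg H1 H2). Qed.
Lemma isd_comp (f g : R -> R) (x df dg : R) :
  is_derive f (g x) df -> is_derive g x dg ->
  is_derive (fun y => f (g y)) x (df * dg).
Proof. intros H1 H2. rewrite Rmult_comm. apply (is_derive_comp f g x df dg H1 H2). Qed.
Lemma isd_ext (f g : R -> R) (x d d' : R) :
  (forall y, f y = g y) -> d = d' -> is_derive f x d -> is_derive g x d'.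
Proof. intros H Hd H1. subst d'. apply (is_derive_ext f g x d H H1). Qed.
Lemma isd_sum (f : nat -> R -> R) (d : nat -> R) n x :
  (forall k, (k <= n)%nat -> is_derive (f k) x (d k)) ->
  is_derive (fun y => sum_f_R0 (fun k => f k y) n) x (sum_f_R0 d n).
Proof.
  intros H. generalize (is_derive_sum_n f n x d H). intros H2.
  eapply isd_ext. 3: exact H2. intros y. apply sum_n_Reals. apply sum_n_Reals.
Qed.

Definition u (t : R) := / (exp t + 1).
Lemma exp1_pos t : 0 < exp t + 1.
Proof. generalize (exp_pos t); lra. Qed.

Lemma isd_u t : is_derive u t (u t ^ 2 - u t).
Proof.
  unfold u. auto_derive. generalize (exp1_pos t); lra.
  generalize (exp1_pos t); intros; field; lra.
Qed.

Definition pmq (p : list R) := padd (0 :: 0 :: p) (pscal (-1) (0 :: p)).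
Lemma pev_pmq p y : pev (pmq p) y = (y ^ 2 - y) * pev p y.
Proof. unfold pmq. rewrite pev_add, pev_scal. simpl. ring. Qed.

Fixpoint Pu (k : nat) : list R :=
  match k with O => (0 :: 1 :: nil) | S k' => pmq (pder (Pu k')) end.
Definition du (k : nat) (t : R) := pev (Pu k) (u t).

Lemma isd_du k t : is_derive (du k) t (du (S k) t).
Proof.
  unfold du. cbn [Pu]. rewrite pev_pmq. rewrite Rmult_comm.
  apply (isd_comp (pev (Pu k)) u). apply is_derive_pev. apply isd_u.
Qed.
Lemma du0 t : du 0 t = u t.
Proof. unfold du; simpl; ring. Qed.

Lemma u_opp t : u (- t) = 1 - u t.
Proof.
  unfold u. rewrite exp_Ropp. generalize (exp_pos t); intros.
  field. lra.
Qed.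

Lemma isd_opp x : is_derive (fun y : R => - y) x (-1).
Proof. auto_derive; auto; ring. Qed.
Lemma isd_eq (f : R -> R) (x d d' : R) : is_derive f x d -> d = d' -> is_derive f x d'.
Proof. intros H <-; exact H. Qed.

Lemma du_odd k : (1 <= k)%nat -> Nat.Even k -> du k 0 = 0.
Proof.
  intros Hk Hev.
  set (v := fun t => u (- t)).
  assert (H1 := dseq_glob v (fun k t => (-1) ^ k * du k (- t))).
  assert (H2 := dseq_glob v (fun k t => match k with O => 1 - du 0 t | _ => - du k t end)).
  destruct (H1 (fun x => ltac:(unfold v; simpl; rewrite du0; ring))) with k 0 as [E1 _].
  { intros j x. eapply isd_eq.
    apply (isd_mult (fun _ => (-1)^j) (fun y => du j (-y)) x 0 (du (S j) (-x) * -1)).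
    apply isd_const. apply (isd_comp (du j) Ropp). apply isd_du. apply isd_opp.
    simpl; ring. }
  destruct (H2 (fun x => ltac:(unfold v; simpl; rewrite du0, u_opp; ring))) with k 0 as [E2 _].
  { intros j x. destruct j as [|j].
    - eapply isd_eq.
      apply (isd_plus (fun _ => 1) (fun y => - du 0 y) x 0 (- du 1 x)).
      apply isd_const.
      eapply isd_eq. apply (isd_comp Ropp (du 0)). apply isd_opp. apply isd_du. ring. ring.
    - eapply isd_eq. apply (isd_comp Ropp (du (S j))). apply isd_opp. apply isd_du. ring. }
  rewrite E1 in E2. destruct k as [|k]; [lia|]. simpl in E2.
  rewrite Ropp_0 in E2.
  destruct Hev as [m Hm].
  assert (Hp : (-1) ^ S k = 1).
  { rewrite Hm, pow_1_even. reflexivity. }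
  simpl in Hp. rewrite Hp in E2. lra.
Qed.

Lemma pascal_sum (a : nat -> R) n :
  sum_f_R0 (fun k => Binomial.C n k * a k) n + sum_f_R0 (fun k => Binomial.C n k * a (S k)) n
  = sum_f_R0 (fun k => Binomial.C (S n) k * a k) (S n).
Proof.
  destruct n as [|m].
  - simpl. rewrite !C_n_0. replace (Binomial.C 1 1) with 1 by (symmetry; apply C_n_n). ring.
  - rewrite (decomp_sum (fun k => Binomial.C (S m) k * a k)) by lia.
    rewrite (decomp_sum (fun k => Binomial.C (S (S m)) k * a k)) by lia.
    simpl pred. rewrite !C_n_0.
    change (sum_f_R0 (fun k => Binomial.C (S m) k * a (S k)) (S m)) with
      (sum_f_R0 (fun k => Binomial.C (S m) k * a (S k)) m + Binomial.C (S m) (S m) * a (S (S m))).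
    change (sum_f_R0 (fun i => Binomial.C (S (S m)) (S i) * a (S i)) (S m)) with
      (sum_f_R0 (fun i => Binomial.C (S (S m)) (S i) * a (S i)) m + Binomial.C (S (S m)) (S (S m)) * a (S (S m))).
    rewrite !C_n_n.
    rewrite (sum_eq (fun i => Binomial.C (S (S m)) (S i) * a (S i))
                    (fun i => Binomial.C (S m) (S i) * a (S i) + Binomial.C (S m) i * a (S i))).
    rewrite sum_plus. ring.
    intros i Hi. rewrite <- pascal by lia. ring.
Qed.

(* Leibniz for u * exp *)
Definition Bn (n : nat) (t : R) := sum_f_R0 (fun k => Binomial.C n k * du k t) n.

Lemma euler_rel_u n : (1 <= n)%nat -> Bn n 0 + du n 0 = 0.
Proof.
  intros Hn.
  set (w := fun t => u t * exp t).
  assert (H1 := dseq_glob w (fun n t => exp t * Bn n t)).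
  assert (H2 := dseq_glob w (fun k t => match k with O => 1 - du 0 t | _ => - du k t end)).
  destruct (H1 (fun x => ltac:(unfold w, Bn; simpl; rewrite du0, C_n_0; ring))) with n 0 as [E1 _].
  { intros j x. eapply isd_eq.
    apply (isd_mult exp (Bn j) x (exp x) (sum_f_R0 (fun k => Binomial.C j k * du (S k) x) j)).
    apply is_derive_exp. unfold Bn. apply isd_sum. intros k _.
    eapply isd_eq. apply (isd_mult (fun _ => Binomial.C j k) (du k)). apply isd_const. apply isd_du. ring.
    unfold Bn. rewrite <- pascal_sum. ring. }
  destruct (H2 (fun x => ltac:(unfold w; simpl; rewrite du0; unfold u;
       generalize (exp1_pos x); intros; field; lra))) with n 0 as [E2 _].
  { intros j x. destruct j as [|j].
    - eapply isd_eq.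
      apply (isd_plus (fun _ => 1) (fun y => - du 0 y) x 0 (- du 1 x)).
      apply isd_const.
      eapply isd_eq. apply (isd_comp Ropp (du 0)). apply isd_opp. apply isd_du. ring. ring.
    - eapply isd_eq. apply (isd_comp Ropp (du (S j))). apply isd_opp. apply isd_du. ring. }
  rewrite E1 in E2. destruct n as [|n]; [lia|]. rewrite exp_0 in E2. lra.
Qed.

Definition Eu (k : nat) := 2 * du k 0.

Lemma euler_poly_Eu k : euler_poly k 0 = Eu k.
Proof.
  unfold euler_poly, Eu.
  rewrite (Derive_n_ext _ (fun t => 2 * du 0 t)).
  rewrite Derive_n_scal_l. f_equal.
  apply (proj1 (dseq_glob (du 0) du (fun _ => eq_refl) isd_du k 0)).
  intros t. rewrite du0, Rmult_0_l, exp_0. unfold u. field. generalize (exp1_pos t); lra.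
Qed.

Fixpoint ff (n : nat) : list R :=
  match n with
  | O => 1 :: nil
  | S m => padd (0 :: ff m) (pscal (- INR m) (ff m))
  end.

Lemma fallfact_pev n x : fallfact n x = pev (ff n) x.
Proof.
  induction n as [|n IH].
  - simpl. ring.
  - cbn [fallfact ff]. rewrite pev_add, pev_scal, IH. simpl. ring.
Qed.

Lemma stirling_nth n k : stirling1 n k = nth k (ff n) 0.
Proof.
  unfold stirling1. rewrite (Derive_n_ext _ (pev (ff n))) by apply fallfact_pev.
  rewrite Derive_n_pev_0. field. apply INR_fact_neq_0.
Qed.

Lemma stir_rec n j : stirling1 (S n) (S j) = stirling1 n j - INR n * stirling1 n (S j).
Proof.
  rewrite !stirling_nth. cbn [ff]. rewrite nth_padd, nth_pscal. simpl nth. ring.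
Qed.

Lemma stir_0 n : stirling1 (S n) 0 = 0.
Proof.
  rewrite stirling_nth. induction n as [|n IH].
  - simpl. ring.
  - change (nth 0 (padd (0 :: ff (S n)) (pscal (- INR (S n)) (ff (S n)))) 0 = 0).
    rewrite nth_padd, nth_pscal, IH. simpl. ring.
Qed.

Lemma stir_11 : stirling1 1 1 = 1.
Proof. rewrite stirling_nth. simpl. ring. Qed.
Lemma stir_1big j : stirling1 1 (S (S j)) = 0.
Proof. rewrite stirling_nth. simpl. destruct j; reflexivity. Qed.

(* derivatives of g(x) = ln x ^ l / x *)
Definition cc (l m j : nat) := Binomial.C l j * INR (fact j) * stirling1 (m + 1) (j + 1).
Definition Gd (l m : nat) (x : R) :=
  / x ^ (m + 1) * sum_f_R0 (fun j => Binomial.C l j * INR (fact j) * stirling1 (m + 1) (j + 1)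
                                     * ln x ^ (l - j)) l.

Lemma binom_shift l i : (i < l)%nat ->
  Binomial.C l (S i) * INR (fact (S i)) = Binomial.C l i * INR (fact i) * INR (l - i).
Proof.
  intros Hi. unfold Binomial.C.
  replace (l - i)%nat with (S (l - S i)) by lia.
  rewrite (fact_simpl (l - S i)). rewrite !mult_INR.
  field. repeat split; try apply INR_fact_neq_0. apply not_0_INR; lia.
Qed.

Lemma key_sum l m L :
  sum_f_R0 (fun j => Binomial.C l j * INR (fact j) * stirling1 (S m + 1) (j + 1) * L ^ (l - j)) l
  = - (INR m + 1) * sum_f_R0 (fun j => Binomial.C l j * INR (fact j) * stirling1 (m + 1) (j + 1) * L ^ (l - j)) l
    + sum_f_R0 (fun j => Binomial.C l j * INR (fact j) * stirling1 (m + 1) (j + 1) * (INR (l - j) * L ^ (Init.Nat.pred (l - j)))) l.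
Proof.
  rewrite scal_sum.
  rewrite <- sum_plus.
  assert (Hs : forall j, stirling1 (S m + 1) (j + 1) = stirling1 (m + 1) j - (INR m + 1) * stirling1 (m+1) (j+1)).
  { intros j. replace (S m + 1)%nat with (S (m + 1)) by lia. replace (j + 1)%nat with (S j) by lia.
    rewrite stir_rec. rewrite plus_INR. simpl. ring. }
  rewrite (sum_eq _ (fun j => Binomial.C l j * INR (fact j) * stirling1 (m + 1) j * L ^ (l - j)
        + Binomial.C l j * INR (fact j) * stirling1 (m + 1) (j + 1) * L ^ (l - j) * (- (INR m + 1)))).
  2: { intros j _. rewrite Hs. ring. }
  rewrite sum_plus.
  rewrite sum_plus. match goal with |- ?a + ?b = ?c + ?d => assert (E1: b = c); [apply sum_eq; intros; ring | assert (E2 : a = d); [| lra]] end.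
  destruct l as [|l].
  - simpl. replace (m+1)%nat with (S m) by lia. rewrite stir_0. ring.
  - rewrite decomp_sum by lia. change (Init.Nat.pred (S l)) with l.
    replace (m+1)%nat with (S m) by lia. rewrite stir_0, Rmult_0_r, Rmult_0_l, Rplus_0_l.
    rewrite tech5. rewrite Nat.sub_diag. change (INR 0) with 0. rewrite Rmult_0_l, Rmult_0_r, Rplus_0_r.
    apply sum_eq. intros i Hi.
    replace (S i) with (i + 1)%nat at 3 by lia.
    replace (S l - S i)%nat with (Init.Nat.pred (S l - i)) by lia.
    rewrite (binom_shift (S l) i) by lia. ring.
Qed.

Lemma isd_Gd l m x : 0 < x -> is_derive (Gd l m) x (Gd l (S m) x).
Proof.
  intros Hx. unfold Gd.
  eapply isd_eq.
  apply (isd_mult (fun y => / y ^ (m + 1))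
     (fun y => sum_f_R0 (fun j => Binomial.C l j * INR (fact j) * stirling1 (m + 1) (j + 1) * ln y ^ (l - j)) l)
     x (- (INR (m+1)) / x ^ (m + 2))
     (sum_f_R0 (fun j => Binomial.C l j * INR (fact j) * stirling1 (m + 1) (j + 1) *
          (INR (l - j) * ln x ^ (Init.Nat.pred (l - j)))) l / x)).
  - auto_derive. apply pow_nonzero; lra.
    replace (m + 2)%nat with (S (m + 1)) by lia.
    replace (Init.Nat.pred (m + 1)) with m by lia. replace (m+1)%nat with (S m) by lia.
    simpl pow. field. split; [apply pow_nonzero|]; lra.
  - unfold Rdiv. rewrite (Rmult_comm (sum_f_R0 _ l) (/ x)), scal_sum. apply isd_sum. intros j _.
    auto_derive. auto. ring.
  - rewrite key_sum. rewrite plus_INR.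
    replace (S m + 1)%nat with (S (m + 1)) by lia.
    replace (m + 2)%nat with (S (m + 1)) by lia. simpl pow.
    simpl INR. field. split; [apply pow_nonzero|]; lra.
Qed.

Lemma Gd0 l x : 0 < x -> Gd l 0 x = ln x ^ l / x.
Proof.
  intros Hx. unfold Gd. simpl Nat.add.
  destruct l as [|l].
  - simpl. rewrite stir_11. unfold Binomial.C. simpl. field. lra.
  - rewrite decomp_sum by lia. simpl pred.
    rewrite (sum_eq _ (fun _ => 0)). 2: { intros i _. replace (S i + 1)%nat with (S (S i)) by lia.
      rewrite stir_1big. ring. }
    rewrite sum_cte. simpl (0 + 1)%nat. rewrite stir_11, C_n_0. simpl. field. lra.
Qed.

Lemma nat_unbounded (A : R) : exists n : nat, A < INR n.
Proof.
  destruct (archimed A) as [H1 _].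
  destruct (Z_le_gt_dec 0 (up A)) as [Hz|Hz].
  - exists (S (Z.to_nat (up A))). rewrite S_INR, INR_IZR_INZ, Z2Nat.id by lia. lra.
  - exists 1%nat. simpl. apply Z.gt_lt in Hz. apply IZR_lt in Hz. lra.
Qed.

Lemma exp_mul_pow (a : R) k : exp a ^ k = exp (INR k * a).
Proof.
  induction k as [|k IH].
  - simpl. rewrite Rmult_0_l, exp_0. reflexivity.
  - rewrite S_INR. simpl pow. rewrite IH, <- exp_plus. f_equal. ring.
Qed.

Lemma exp_ge_pow y k : 0 <= y -> y ^ k / INR (fact k) <= exp y.
Proof.
  intros Hy. eapply Rle_trans. 2: apply (exp_ge_taylor y k Hy).
  destruct k as [|k].
  - simpl. lra.
  - rewrite tech5. assert (0 <= sum_f_R0 (fun k0 => y ^ k0 / INR (fact k0)) k).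
    { apply cond_pos_sum. intros n. apply Rdiv_le_0_compat. apply pow_le; auto.
      apply INR_fact_lt_0. }
    lra.
Qed.

Lemma exp_le x y : x <= y -> exp x <= exp y.
Proof. intros [H|H]. left; apply exp_increasing; auto. subst; lra. Qed.

Lemma yk_exp_bound (y z : R) k : 1/2 <= z -> 0 < y ->
  y ^ k * exp (- z * y) <= INR (fact (S k)) * 2 ^ (S k) / y.
Proof.
  intros Hz Hy.
  assert (H1 : exp (- z * y) <= / exp (y / 2)).
  { rewrite <- exp_Ropp. apply exp_le. nra. }
  assert (H2 := exp_ge_pow (y/2) (S k) ltac:(lra)).
  assert (Hf := INR_fact_lt_0 (S k)).
  assert (Hp : 0 < (y/2) ^ S k) by (apply pow_lt; lra).
  assert (He := exp_pos (y/2)).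
  apply Rle_trans with (y ^ k * / exp (y / 2)).
  { apply Rmult_le_compat_l; auto. apply pow_le; lra. }
  apply Rle_trans with (y ^ k * / ((y/2) ^ S k / INR (fact (S k)))).
  { apply Rmult_le_compat_l. apply pow_le; lra. apply Rinv_le_contravar; auto.
    apply Rdiv_lt_0_compat; auto. }
  right. replace ((y/2) ^ S k) with (y ^ S k * / 2 ^ S k).
  simpl pow. field. repeat split; try apply pow_nonzero; try apply INR_fact_neq_0; lra.
  unfold Rdiv. rewrite Rpow_mult_distr, pow_inv. reflexivity.
Qed.

Lemma decr_ye (y1 y2 z : R) k : 0 < y1 -> y1 <= y2 -> INR k <= z * y1 ->
  y2 ^ k * exp (- z * y2) <= y1 ^ k * exp (- z * y1).
Proof.
  intros H1 H2 H3. set (d := y2 - y1).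
  assert (Hd : 0 <= d) by (unfold d; lra).
  assert (Hy2 : y2 = y1 * (1 + d / y1)) by (unfold d; field; lra).
  assert (Hb : (1 + d / y1) ^ k <= exp (d / y1) ^ k).
  { apply pow_incr. split. assert (0 <= d / y1) by (apply Rdiv_le_0_compat; lra). lra.
    apply exp_ineq1_le. }
  rewrite exp_mul_pow in Hb.
  assert (Hc : exp (INR k * (d / y1)) <= exp (z * d)).
  { apply exp_le. apply Rmult_le_reg_r with y1; auto.
    replace (INR k * (d / y1) * y1) with (INR k * d) by (field; lra).
    nra. }
  rewrite Hy2 at 1. rewrite Rpow_mult_distr.
  replace (exp (- z * y2)) with (exp (- z * y1) * / exp (z * d)).
  2: { rewrite <- exp_Ropp, <- exp_plus. f_equal. unfold d; ring. }
  assert (0 < exp (- z * y1)) by apply exp_pos.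
  assert (0 < exp (z * d)) by apply exp_pos.
  assert (0 <= y1 ^ k) by (apply pow_le; lra).
  apply Rle_trans with (y1 ^ k * exp (z * d) * (exp (- z * y1) * / exp (z * d))).
  { apply Rmult_le_compat_r. apply Rmult_le_pos; [lra | left; apply Rinv_0_lt_compat; auto].
    apply Rmult_le_compat_l; auto. lra. }
  right. field. lra.
Qed.

Lemma sum_opp' (f : nat -> R) n : sum_f_R0 (fun j => - f j) n = - sum_f_R0 f n.
Proof. induction n as [|n IH]; simpl; [ring| rewrite IH; ring]. Qed.

Lemma alt_bound (c : nat -> R) a p :
  (forall i, (a <= i)%nat -> 0 <= c (S i) <= c i) -> 0 <= c a ->
  0 <= sum_f_R0 (fun j => (-1) ^ j * c (a + j)%nat) p <= c a.
Proof.
  revert a; induction p as [|p IH]; intros a Hc Ha.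
  - simpl. rewrite Nat.add_0_r. lra.
  - rewrite decomp_sum by lia. change (Init.Nat.pred (S p)) with p.
    rewrite (sum_eq _ (fun j => - ((-1) ^ j * c (S a + j)%nat))).
    2: { intros i _. replace (a + S i)%nat with (S a + i)%nat by lia. simpl. ring. }
    rewrite sum_opp'. 
    assert (IH' := IH (S a) ltac:(intros i Hi; apply Hc; lia) ltac:(apply (Hc a); lia)).
    assert (Hca := Hc a (le_n a)).
    simpl pow. rewrite Nat.add_0_r. lra.
Qed.


Lemma dseq_loc_b (f : R -> R) (d : nat -> R -> R) (U : R -> Prop) (K : nat) :
  (forall x, U x -> locally x U) ->
  (forall x, U x -> f x = d 0%nat x) ->
  (forall k x, (k < K)%nat -> U x -> is_derive (d k) x (d (S k) x)) ->
  forall k x, (k <= K)%nat -> U x -> Derive_n f k x = d k x.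
Proof.
  intros HU H0 Hd k; induction k as [|k IH]; intros x Hk Hx.
  - simpl; auto.
  - simpl. rewrite (Derive_ext_loc _ (d k)).
    + apply is_derive_unique; apply Hd; auto; lia.
    + apply (filter_imp U); auto. intros; apply IH; auto; lia.
Qed.

Definition tk (q : R) (k n : nat) (z : R) :=
  (-1) ^ n * ((- ln (INR n + q)) ^ k * exp (- z * ln (INR n + q))).
Definition fn (q : R) (k m : nat) (z : R) := sum_f_R0 (fun n => tk q k n z) m.
Definition hk (q : R) (k : nat) (z : R) : R := real (Lim_seq (fun m => fn q k m z)).
Definition Dz (z : R) := 1/2 < z < 3/2.

Lemma isd_tk q k n z : is_derive (tk q k n) z (tk q (S k) n z).
Proof. unfold tk. auto_derive; auto. simpl. ring. Qed.

Lemma isd_fn q k m z : is_derive (fn q k m) z (fn q (S k) m z).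
Proof. unfold fn. apply isd_sum. intros; apply isd_tk. Qed.

Lemma Derive_fn q k m : Derive (fn q k m) = fn q (S k) m.
Proof. apply functional_extensionality. intros z. apply is_derive_unique, isd_fn. Qed.

Lemma open_Dz : open Dz.
Proof. unfold Dz. apply open_and. apply open_gt. apply open_lt. Qed.

Lemma tk_alt q k i z :
  tk q k i z = (-1) ^ k * ((-1) ^ i * (ln (INR i + q) ^ k * exp (- z * ln (INR i + q)))).
Proof.
  unfold tk. replace (- ln (INR i + q)) with (-1 * ln (INR i + q)) by ring.
  rewrite Rpow_mult_distr. ring.
Qed.

Lemma cauchy_fn q l k : 2 * INR l + 1 <= ln q -> (k <= l)%nat -> CVU_cauchy (fn q k) Dz.
Proof.
  intros Hq Hk eps.
  set (c := fun (z : R) (j : nat) => ln (INR j + q) ^ k * exp (- z * ln (INR j + q))).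
  set (B := INR (fact (S k)) * 2 ^ (S k)).
  assert (HB : 0 < B) by (unfold B; apply Rmult_lt_0_compat; [apply INR_fact_lt_0 | apply pow_lt; lra]).
  destruct (nat_unbounded (exp (B / eps))) as [N HN].
  assert (Hlq : 0 < ln q).
  { assert (0 <= INR l) by apply pos_INR. lra. }
  assert (Hq0 : 1 < q).
  { rewrite <- (exp_ln q). rewrite <- exp_0. apply exp_increasing; auto.
    destruct (Rlt_dec 0 q) as [Hp|Hp]; auto. unfold ln in Hlq.
    destruct (Rlt_dec 0 q); [contradiction| lra]. }
  assert (HL : forall j, ln q <= ln (INR j + q)).
  { intros j. apply ln_le. lra. generalize (pos_INR j); lra. }
  assert (Hkl : INR k <= INR l) by (apply le_INR; auto).
  assert (Hc : forall z j, Dz z -> 0 <= c z (S j) <= c z j).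
  { intros z j [Hz1 Hz2]. unfold c. split.
    - apply Rmult_le_pos. apply pow_le. generalize (HL (S j)); lra. left; apply exp_pos.
    - apply decr_ye. generalize (HL j); lra. apply ln_le. generalize (pos_INR j); lra.
      rewrite S_INR; lra. generalize (HL j); nra. }
  assert (Hcb : forall z j, Dz z -> (N <= j)%nat -> c z j < eps).
  { intros z j [Hz1 Hz2] Hj. unfold c.
    assert (HLj : 0 < ln (INR j + q)) by (generalize (HL j); lra).
    eapply Rle_lt_trans. apply yk_exp_bound; auto; lra. fold B.
    apply (Rmult_lt_reg_r (ln (INR j + q))); auto.
    unfold Rdiv. rewrite Rmult_assoc, Rinv_l by lra. rewrite Rmult_1_r.
    apply (Rmult_lt_reg_r (/ eps)). apply Rinv_0_lt_compat, cond_pos.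
    replace (eps * ln (INR j + q) * / eps) with (ln (INR j + q)) by (field; apply Rgt_not_eq, cond_pos).
    rewrite <- (ln_exp (B * / eps)). apply ln_increasing. apply exp_pos.
    apply Rlt_le_trans with (INR N); auto. apply Rle_trans with (INR j). apply le_INR; auto.
    lra. }
  exists (S N). intros n m z Hz Hn Hm.
  assert (Hgen : forall a b, (S N <= a)%nat -> (a < b)%nat -> Rabs (fn q k b z - fn q k a z) < eps).
  { intros a b Ha Hab. unfold fn. rewrite (tech2 _ a b Hab).
    replace (sum_f_R0 (fun n0 => tk q k n0 z) a +
       sum_f_R0 (fun i => tk q k (S a + i) z) (b - S a) - sum_f_R0 (fun n0 => tk q k n0 z) a)
      with (sum_f_R0 (fun i => tk q k (S a + i) z) (b - S a)) by ring.
    rewrite (sum_eq _ (fun i => ((-1) ^ i * c z (S a + i)%nat) * ((-1) ^ k * (-1) ^ (S a)))).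
    2: { intros i _. rewrite tk_alt. rewrite pow_add. unfold c. ring. }
    rewrite <- scal_sum. rewrite Rabs_mult, Rabs_mult, !pow_1_abs, Rmult_1_l, Rmult_1_l.
    destruct (alt_bound (c z) (S a) (b - S a)) as [A1 A2].
    { intros i _. apply Hc; auto. }
    { apply Hc; auto. }
    rewrite Rabs_right by lra. eapply Rle_lt_trans. apply A2. apply Hcb; auto. lia. }
  destruct (Nat.lt_trichotomy n m) as [Hlt|[Heq|Hgt]].
  - rewrite Rabs_minus_sym. apply Hgen; auto.
  - subst. unfold Rminus. rewrite Rplus_opp_r, Rabs_R0. apply cond_pos.
  - apply Hgen; auto.
Qed.

Lemma ex_derive_cont_pt (f : R -> R) (x : R) : ex_derive f x -> continuity_pt f x.
Proof.
  intros [d H]. apply is_derive_Reals in H.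
  apply derivable_continuous_pt. exists d. exact H.
Qed.

Lemma cvu_fn q l k : 2 * INR l + 1 <= ln q -> (k <= l)%nat -> CVU_dom (fn q k) Dz.
Proof. intros. apply CVU_dom_cauchy. eapply cauchy_fn; eauto. Qed.

Lemma hk_deriv q l k z : 2 * INR l + 1 <= ln q -> (k < l)%nat -> Dz z ->
  is_derive (hk q k) z (hk q (S k) z).
Proof.
  intros Hq Hk Hz.
  assert (H := CVU_Derive (fn q k) Dz open_Dz
    ltac:(intros a b x [Ha _] [_ Hb] Hx; unfold Dz; lra)
    (cvu_fn q l k Hq ltac:(lia))
    ltac:(intros n x _; eexists; apply isd_fn)
    ltac:(intros n x _; rewrite Derive_fn; apply ex_derive_cont_pt; eexists; apply isd_fn)).
  assert (E : (fun n x => Derive (fn q k n) x) = fn q (S k)).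
  { apply functional_extensionality; intros n. apply Derive_fn. }
  rewrite E in H. specialize (H (cvu_fn q l (S k) Hq Hk) z Hz).
  unfold hk. assert (E2 : (fun n => Derive (fn q k n) z) = (fun n => fn q (S k) n z)) by (apply functional_extensionality; intros n; rewrite Derive_fn; reflexivity). rewrite E2 in H. exact H.
Qed.

Lemma zetaE_hk q z : zetaE z q = hk q 0 z.
Proof.
  unfold zetaE, Series, hk. f_equal. apply Lim_seq_ext. intros m.
  rewrite sum_n_Reals. unfold fn. apply sum_eq. intros i _. unfold tk, Rpower. simpl. ring.
Qed.

Lemma mst_hk q l : 2 * INR l + 1 <= ln q -> mstieltjes l q = (-1) ^ l * hk q l 1.
Proof.
  intros Hq. unfold mstieltjes. f_equal.
  apply (dseq_loc_b (fun z => zetaE z q) (hk q) Dz l).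
  - apply open_Dz.
  - intros; apply zetaE_hk.
  - intros k x Hk Hx. apply (hk_deriv q l); auto.
  - lia.
  - unfold Dz; lra.
Qed.

Lemma series_part q l : 2 * INR l + 1 <= ln q ->
  forall eps : posreal, exists N : nat, forall m, (N <= m)%nat ->
    Rabs (sum_f_R0 (fun n => (-1) ^ n * (ln (INR n + q) ^ l / (INR n + q))) m - mstieltjes l q) < eps.
Proof.
  intros Hq eps.
  assert (Hf : ex_finite_lim_seq (fun m => fn q l m 1)).
  { apply (CVU_CVS_dom (fn q l) Dz (cvu_fn q l l Hq (le_n l))). unfold Dz; lra. }
  assert (Hl := Lim_seq_correct' _ Hf).
  apply ex_finite_lim_seq_correct in Hf. destruct Hf as [_ Hfin].
  rewrite <- Hfin in Hl. apply is_lim_seq_spec in Hl.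
  assert (Hlq : 0 < ln q) by (generalize (pos_INR l); lra).
  assert (Hq0 : 0 < q).
  { destruct (Rlt_dec 0 q) as [Hp|Hp]; auto. unfold ln in Hlq.
    destruct (Rlt_dec 0 q); [contradiction| lra]. }
  assert (Hpl : (-1) ^ l * (-1) ^ l = 1).
  { rewrite <- pow_add. replace (l + l)%nat with (2 * l)%nat by lia. apply pow_1_even. }
  destruct (Hl eps) as [N HN]. exists N. intros m Hm.
  rewrite (mst_hk q l Hq).
  replace (sum_f_R0 (fun n => (-1) ^ n * (ln (INR n + q) ^ l / (INR n + q))) m)
    with ((-1) ^ l * fn q l m 1).
  - rewrite <- Rmult_minus_distr_l, Rabs_mult, pow_1_abs, Rmult_1_l. apply HN; auto.
  - unfold fn. rewrite scal_sum. apply sum_eq. intros i _. rewrite tk_alt.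
    assert (Hx : 0 < INR i + q) by (generalize (pos_INR i); lra).
    replace (- (1) * ln (INR i + q)) with (- ln (INR i + q)) by ring.
    rewrite exp_Ropp, exp_ln by auto. unfold Rdiv.
    transitivity ((-1) ^ l * (-1) ^ l * ((-1) ^ i * (ln (INR i + q) ^ l * / (INR i + q)))).
    ring. rewrite Hpl; ring.
Qed.

Lemma Eu0 : Eu 0 = 1.
Proof. unfold Eu. rewrite du0. unfold u. rewrite exp_0. field. Qed.

Lemma Eu_even j : (1 <= j)%nat -> Eu (2 * j) = 0.
Proof. intros Hj. unfold Eu. rewrite du_odd. ring. lia. exists j; reflexivity. Qed.

Lemma Eu_rel m : (1 <= m)%nat ->
  sum_f_R0 (fun k => Binomial.C m k * Eu k) m + Eu m = 0.
Proof.
  intros Hm. assert (H := euler_rel_u m Hm). unfold Bn in H. unfold Eu.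
  replace (sum_f_R0 (fun k => Binomial.C m k * (2 * du k 0)) m)
    with (2 * sum_f_R0 (fun k => Binomial.C m k * du k 0) m).
  lra. rewrite scal_sum. apply sum_eq; intros; ring.
Qed.

Lemma Eu1 : Eu 1 = - 1 / 2.
Proof.
  assert (H := Eu_rel 1 (le_n 1)). simpl in H. rewrite Eu0 in H.
  rewrite C_n_0 in H. replace (Binomial.C 1 1) with 1 in H by (symmetry; apply C_n_n). lra.
Qed.

Lemma Eu_rel_fact m :
  sum_f_R0 (fun k => Eu k / INR (fact k) / INR (fact (m - k))) m =
  match m with O => 1 | _ => - Eu m / INR (fact m) end.
Proof.
  destruct m as [|m].
  - simpl. rewrite Eu0. field.
  - assert (H := Eu_rel (S m) ltac:(lia)).
    assert (Hf := INR_fact_lt_0 (S m)).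
    apply (Rmult_eq_reg_r (INR (fact (S m)))); [|lra].
    rewrite (Rmult_comm (sum_f_R0 _ _)), scal_sum.
    replace (- Eu (S m) / INR (fact (S m)) * INR (fact (S m))) with (- Eu (S m)) by (field; lra).
    rewrite <- (sum_eq (fun k => Binomial.C (S m) k * Eu k)). lra.
    intros i Hi. unfold Binomial.C. field. split; apply INR_fact_neq_0.
Qed.

Definition PM (l M : nat) (x : R) :=
  / 2 * sum_f_R0 (fun k => Eu k / INR (fact k) * Gd l k x) M.

Lemma Gd1 l x : 0 < x -> Gd l 1 x = (INR l * ln x ^ (l - 1) - ln x ^ l) / x ^ 2.
Proof.
  intros Hx.
  rewrite <- (is_derive_unique _ _ _ (isd_Gd l 0 x Hx)).
  rewrite (Derive_ext_loc _ (fun y => ln y ^ l / y)).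
  - apply is_derive_unique. auto_derive. lra.
    rewrite Nat.sub_1_r. field. lra.
  - assert (Hl : locally x (fun y => 0 < y)) by (apply (open_gt 0); auto).
    apply (filter_imp (fun y => 0 < y)); auto. intros y Hy. apply Gd0; auto.
Qed.

Lemma asym_PM l N x : 0 < x -> asym_partial l N x = PM l (2 * N + 1) x.
Proof.
  intros Hx. induction N as [|N IH].
  - simpl. unfold PM. simpl. rewrite Gd0, Gd1, Eu0, Eu1 by auto. simpl. field. lra.
  - cbn [asym_partial]. rewrite IH. unfold PM.
    replace (2 * S N + 1)%nat with (S (S (2 * N + 1))) by lia.
    rewrite tech5, tech5. replace (S (2 * N + 1)) with (2 * S N)%nat by lia.
    rewrite Eu_even by lia. replace (S (2 * S N)) with (2 * S N + 1)%nat by lia.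
    unfold asym_term, Gd. replace (2 * S N + 1 + 1)%nat with (2 * S N + 2)%nat by lia.
    rewrite euler_poly_Eu. field. repeat split; try apply INR_fact_neq_0; apply pow_nonzero; lra.
Qed.

Lemma sqrt_exp_half x : 0 < x -> sqrt x = exp (ln x / 2).
Proof.
  intros Hx. rewrite <- (sqrt_pow2 (exp (ln x / 2))) by (left; apply exp_pos).
  f_equal. simpl. rewrite Rmult_1_r, <- exp_plus. replace (ln x / 2 + ln x / 2) with (ln x) by field.
  rewrite exp_ln; auto.
Qed.

Lemma ln_pow_sqrt l x : 1 <= x -> ln x ^ l <= 2 ^ l * INR (fact l) * sqrt x.
Proof.
  intros Hx. assert (HL : 0 <= ln x) by (rewrite <- ln_1; apply ln_le; lra).
  assert (H := exp_ge_pow (ln x / 2) l ltac:(lra)).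
  rewrite <- sqrt_exp_half in H by lra.
  assert (Hf := INR_fact_lt_0 l).
  replace (ln x ^ l) with (2 ^ l * (ln x / 2) ^ l).
  2: { unfold Rdiv. rewrite Rpow_mult_distr, pow_inv. field. apply pow_nonzero; lra. }
  rewrite Rmult_assoc. apply Rmult_le_compat_l. apply pow_le; lra.
  apply (Rmult_le_reg_r (/ INR (fact l))). apply Rinv_0_lt_compat; auto.
  replace (INR (fact l) * sqrt x * / INR (fact l)) with (sqrt x) by (field; lra). exact H.
Qed.

Lemma sqrt_ge1 x : 1 <= x -> 1 <= sqrt x.
Proof. intros H. rewrite <- sqrt_1. apply sqrt_le_1_alt; auto. Qed.
Lemma sqrt_le_self x : 1 <= x -> sqrt x <= x.
Proof.
  intros H. assert (H1 := sqrt_ge1 x H). rewrite <- (sqrt_sqrt x) at 2 by lra. nra.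
Qed.

Definition KG (l m : nat) :=
  sum_f_R0 (fun j => Rabs (Binomial.C l j * INR (fact j) * stirling1 (m + 1) (j + 1))) l
  * (1 + 2 ^ l * INR (fact l)).

Lemma KG_pos l m : 0 <= KG l m.
Proof.
  unfold KG. apply Rmult_le_pos. apply cond_pos_sum; intros; apply Rabs_pos.
  assert (0 < 2 ^ l * INR (fact l)). apply Rmult_lt_0_compat. apply pow_lt; lra. apply INR_fact_lt_0.
  lra.
Qed.

Lemma Lpow_le l j x : 1 <= x -> ln x ^ (l - j) <= (1 + 2 ^ l * INR (fact l)) * sqrt x.
Proof.
  intros Hx. assert (HL : 0 <= ln x) by (rewrite <- ln_1; apply ln_le; lra).
  assert (Hs := sqrt_ge1 x Hx). assert (Hp := ln_pow_sqrt l x Hx).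
  assert (H0 : 0 < 2 ^ l * INR (fact l)). apply Rmult_lt_0_compat. apply pow_lt; lra. apply INR_fact_lt_0.
  assert (H1 : ln x ^ (l - j) <= 1 + ln x ^ l).
  { destruct (Rle_or_lt (ln x) 1) as [H|H].
    - assert (H1 : ln x ^ (l - j) <= 1 ^ (l - j)) by (apply pow_incr; lra).
      rewrite pow1 in H1. assert (0 <= ln x ^ l) by (apply pow_le; lra). lra.
    - assert (ln x ^ (l - j) <= ln x ^ l) by (apply Rle_pow; lra || lia). lra. }
  nra.
Qed.

Lemma Gd_bound l m x : 1 <= x -> Rabs (Gd l m x) <= KG l m * sqrt x / x ^ (m + 1).
Proof.
  intros Hx. unfold Gd, KG.
  assert (Hxp : 0 < x ^ (m + 1)) by (apply pow_lt; lra).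
  rewrite Rabs_mult, Rabs_right by (left; apply Rinv_0_lt_compat; auto).
  unfold Rdiv. rewrite Rmult_comm. apply Rmult_le_compat_r. left; apply Rinv_0_lt_compat; auto.
  eapply Rle_trans. apply sum_f_R0_triangle.
  rewrite Rmult_assoc, (Rmult_comm (sum_f_R0 _ l)), scal_sum.
  apply sum_Rle. intros j Hj. rewrite Rabs_mult.
  rewrite (Rabs_right (ln x ^ (l - j))).
  2: { apply Rle_ge, pow_le. rewrite <- ln_1; apply ln_le; lra. }
  apply Rmult_le_compat_l. apply Rabs_pos. apply Lpow_le; auto.
Qed.

Lemma taylor_Gd l k n x : 0 < x -> exists zeta, x < zeta < x + 1 /\
  Gd l k (x + 1) = sum_f_R0 (fun j => Gd l (k + j) x / INR (fact j)) n
                   + Gd l (k + S n) zeta / INR (fact (S n)).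
Proof.
  intros Hx.
  assert (HU : forall y, 0 < y -> locally y (fun t => 0 < t)).
  { intros y Hy. apply (open_gt 0); auto. }
  assert (Hd : forall j y, 0 < y -> is_derive (Gd l (k + j)) y (Gd l (k + S j) y)).
  { intros j y Hy. replace (k + S j)%nat with (S (k + j)) by lia. apply isd_Gd; auto. }
  assert (HD := dseq_loc (Gd l k) (fun j => Gd l (k + j)) (fun t => 0 < t) HU
     ltac:(intros; cbv beta; rewrite Nat.add_0_r; auto) Hd).
  assert (HE := dseq_loc_ex (Gd l k) (fun j => Gd l (k + j)) (fun t => 0 < t) HU
     ltac:(intros; cbv beta; rewrite Nat.add_0_r; auto) Hd).
  destruct (Taylor_Lagrange (Gd l k) n x (x + 1) ltac:(lra)
     ltac:(intros t Ht j _; apply HE; lra)) as [zeta [Hz Heq]].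
  exists zeta. split; auto. rewrite Heq.
  replace (x + 1 - x) with 1 by ring. rewrite pow1. rewrite HD by lra.
  f_equal. apply sum_eq. intros i _. rewrite pow1, HD by lra. field. apply INR_fact_neq_0.
  field. apply INR_fact_neq_0.
Qed.

Lemma tri (a G : nat -> R) M :
  sum_f_R0 (fun k => a k * sum_f_R0 (fun j => G (k + j)%nat / INR (fact j)) (M - k)) M
  = sum_f_R0 (fun m => G m * sum_f_R0 (fun k => a k / INR (fact (m - k))) m) M.
Proof.
  induction M as [|M IH].
  - simpl. field.
  - rewrite (tech5 (fun k => a k * sum_f_R0 (fun j => G (k + j)%nat / INR (fact j)) (S M - k)) M).
    rewrite (sum_eq (fun k => a k * sum_f_R0 (fun j => G (k + j)%nat / INR (fact j)) (S M - k))
        (fun k => a k * sum_f_R0 (fun j => G (k + j)%nat / INR (fact j)) (M - k)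
                  + (a k / INR (fact (S M - k))) * G (S M))).
    2: { intros i Hi. replace (S M - i)%nat with (S (M - i)) by lia. rewrite tech5.
         replace (i + S (M - i))%nat with (S M) by lia. field. apply INR_fact_neq_0. }
    rewrite sum_plus, IH. rewrite (tech5 (fun m => G m * sum_f_R0 (fun k => a k / INR (fact (m - k))) m) M).
    rewrite tech5. rewrite Nat.sub_diag. rewrite <- scal_sum.
    replace (S M + 0)%nat with (S M) by lia. simpl (fact 0).
    cbn [sum_f_R0]. rewrite Nat.add_0_r. simpl (fact 0). change (INR 1) with 1. field.
Qed.

Definition Tk l M k x := sum_f_R0 (fun j => Gd l (k + j) x / INR (fact j)) (M - k).

Lemma e_ident l M x : (1 <= M)%nat ->
  Gd l 0 x - PM l M x - PM l M (x + 1) =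
  - / 2 * sum_f_R0 (fun k => Eu k / INR (fact k) * (Gd l k (x + 1) - Tk l M k x)) M.
Proof.
  intros HM. unfold PM.
  assert (H1 : sum_f_R0 (fun k => Eu k / INR (fact k) * Gd l k (x + 1)) M =
     sum_f_R0 (fun k => Eu k / INR (fact k) * Tk l M k x) M +
     sum_f_R0 (fun k => Eu k / INR (fact k) * (Gd l k (x + 1) - Tk l M k x)) M).
  { rewrite <- sum_plus. apply sum_eq; intros; ring. }
  assert (H2 := tri (fun k => Eu k / INR (fact k)) (fun m => Gd l m x) M).
  unfold Tk in H1. rewrite H2 in H1.
  rewrite (sum_eq (fun m => Gd l m x * sum_f_R0 (fun k => Eu k / INR (fact k) / INR (fact (m - k))) m)
     (fun m => Gd l m x * match m with O => 1 | _ => - Eu m / INR (fact m) end)) in H1.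
  2: { intros i _. rewrite Eu_rel_fact. reflexivity. }
  assert (H3 : sum_f_R0 (fun m => Gd l m x * match m with O => 1 | _ => - Eu m / INR (fact m) end) M
     = Gd l 0 x + - sum_f_R0 (fun i => Eu (S i) / INR (fact (S i)) * Gd l (S i) x) (pred M)).
  { rewrite decomp_sum by lia. rewrite <- sum_opp'. f_equal. ring.
    apply sum_eq. intros i _. cbv beta iota. field. apply INR_fact_neq_0. }
  rewrite H3 in H1.
  rewrite (decomp_sum (fun k => Eu k / INR (fact k) * Gd l k x)) by lia.
  rewrite Eu0. simpl (fact 0). change (INR 1) with 1.
  unfold Tk. lra.
Qed.

Lemma pow_ge_self x n : 1 <= x -> x <= x ^ (S n).
Proof. intros H. rewrite <- (pow_1 x) at 1. apply Rle_pow; auto; lia. Qed.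

Lemma Rk_bound l M k x : 1 <= x -> (k <= M)%nat ->
  Rabs (Gd l k (x + 1) - Tk l M k x) <= KG l (M + 1) / x ^ (M + 1).
Proof.
  intros Hx Hk. destruct (taylor_Gd l k (M - k) x ltac:(lra)) as [z [Hz Heq]].
  unfold Tk. rewrite Heq. replace (k + S (M - k))%nat with (M + 1)%nat by lia.
  match goal with |- Rabs (?a + ?b - ?a) <= _ => replace (a + b - a) with b by ring end.
  assert (Hf : 1 <= INR (fact (S (M - k)))).
  { apply (le_INR 1). apply lt_O_fact. }
  assert (Hz1 : 1 <= z) by lra.
  assert (HB := Gd_bound l (M + 1) z Hz1).
  assert (HK := KG_pos l (M + 1)).
  assert (Hs := sqrt_le_self z Hz1).
  assert (Hxp : 0 < x ^ (M + 1)) by (apply pow_lt; lra).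
  assert (Hzp : 0 < z ^ (M + 1)) by (apply pow_lt; lra).
  assert (Hxz : x ^ (M + 1) <= z ^ (M + 1)) by (apply pow_incr; lra).
  unfold Rdiv. rewrite Rabs_mult. rewrite (Rabs_right (/ _)).
  2: { apply Rle_ge. left. apply Rinv_0_lt_compat. lra. }
  apply Rle_trans with (Rabs (Gd l (M + 1) z) * 1).
  { apply Rmult_le_compat_l. apply Rabs_pos. rewrite <- Rinv_1. apply Rinv_le_contravar; lra. }
  rewrite Rmult_1_r. eapply Rle_trans. apply HB.
  apply Rle_trans with (KG l (M + 1) * / z ^ (M + 1)).
  - unfold Rdiv. rewrite Rmult_assoc. apply Rmult_le_compat_l; auto.
    replace (M + 1 + 1)%nat with (S (M + 1)) by lia. simpl pow.
    rewrite Rinv_mult. rewrite <- Rmult_assoc.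
    rewrite <- (Rmult_1_l (/ z ^ (M + 1))) at 2.
    apply Rmult_le_compat_r. left; apply Rinv_0_lt_compat; auto.
    apply (Rmult_le_reg_r z). lra. rewrite Rmult_assoc, Rinv_l by lra. lra.
  - unfold Rdiv. apply Rmult_le_compat_l; auto. apply Rinv_le_contravar; auto.
Qed.

Definition CE l M := / 2 * sum_f_R0 (fun k => Rabs (Eu k) / INR (fact k)) M * KG l (M + 1).

Lemma e_bound l M x : (1 <= M)%nat -> 1 <= x ->
  Rabs (Gd l 0 x - PM l M x - PM l M (x + 1)) <= CE l M / x ^ (M + 1).
Proof.
  intros HM Hx. rewrite e_ident by auto.
  rewrite Rabs_mult. rewrite Rabs_left by lra. unfold CE.
  replace (- - / 2) with (/ 2) by ring.
  apply Rle_trans with (/ 2 * (sum_f_R0 (fun k => Rabs (Eu k) / INR (fact k)) M * (KG l (M + 1) / x ^ (M + 1)))).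
  2: { right; unfold Rdiv; ring. }
  apply Rmult_le_compat_l. lra.
  eapply Rle_trans. apply sum_f_R0_triangle.
  rewrite (Rmult_comm (sum_f_R0 _ M)).
  rewrite scal_sum. apply sum_Rle. intros k Hk.
  unfold Rdiv. rewrite Rabs_mult, Rabs_mult, (Rabs_right (/ INR (fact k))).
  2: { apply Rle_ge; left; apply Rinv_0_lt_compat, INR_fact_lt_0. }
  fold (Rdiv (KG l (M+1)) (x ^ (M+1))). apply Rmult_le_compat_l. apply Rmult_le_pos. apply Rabs_pos.
  left; apply Rinv_0_lt_compat, INR_fact_lt_0.
  apply Rk_bound; auto.
Qed.

Definition CP l M := / 2 * sum_f_R0 (fun k => Rabs (Eu k) / INR (fact k) * KG l k) M.

Lemma PM_bound l M y : 1 <= y -> Rabs (PM l M y) <= CP l M / sqrt y.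
Proof.
  intros Hy. unfold PM, CP. rewrite Rabs_mult, Rabs_right by lra.
  unfold Rdiv. rewrite Rmult_assoc. apply Rmult_le_compat_l. lra.
  eapply Rle_trans. apply sum_f_R0_triangle.
  rewrite (Rmult_comm _ (/ sqrt y)), scal_sum. apply sum_Rle. intros k _.
  unfold Rdiv. rewrite Rabs_mult, Rabs_mult, (Rabs_right (/ INR (fact k))).
  2: { apply Rle_ge; left; apply Rinv_0_lt_compat, INR_fact_lt_0. }
  assert (Hs1 := sqrt_ge1 y Hy).
  assert (HB := Gd_bound l k y Hy).
  assert (Hyp : 0 < y ^ (k + 1)) by (apply pow_lt; lra).
  assert (HK := KG_pos l k).
  assert (Hb2 : KG l k * sqrt y / y ^ (k + 1) <= KG l k * / sqrt y).
  { unfold Rdiv. rewrite Rmult_assoc. apply Rmult_le_compat_l; auto.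
    replace (k + 1)%nat with (S k) in * by lia.
    assert (Hyk := pow_ge_self y k Hy).
    rewrite <- (sqrt_sqrt y) in Hyk at 1 by lra.
    apply (Rmult_le_reg_r (y ^ S k)); auto.
    rewrite Rmult_assoc, Rinv_l by lra.
    apply (Rmult_le_reg_l (sqrt y)). lra.
    replace (sqrt y * (/ sqrt y * y ^ S k)) with (y ^ S k) by (field; lra). nra. }
  assert (0 <= Rabs (Eu k) * / INR (fact k)).
  { apply Rmult_le_pos. apply Rabs_pos. left; apply Rinv_0_lt_compat, INR_fact_lt_0. }
  apply Rle_trans with (Rabs (Eu k) * / INR (fact k) * (KG l k * / sqrt y)).
  apply Rmult_le_compat_l; auto. lra. right; ring.
Qed.

Lemma tele (g P : nat -> R) m :
  sum_f_R0 (fun n => (-1) ^ n * (g n - P n - P (S n))) m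
  = sum_f_R0 (fun n => (-1) ^ n * g n) m - P 0%nat + (-1) ^ (S m) * P (S m).
Proof.
  induction m as [|m IH].
  - simpl. ring.
  - rewrite tech5, (tech5 (fun n => (-1) ^ n * g n)), IH. simpl pow. ring.
Qed.

Lemma inv_sq_le t : 1 < t -> / t ^ 2 <= / (t - 1) - / t.
Proof.
  intros Ht. replace (/ (t - 1) - / t) with (/ (t * (t - 1))) by (field; lra).
  apply Rinv_le_contravar. apply Rmult_lt_0_compat; lra. simpl. nra.
Qed.

Lemma inv_sq_sum q m : 1 < q ->
  sum_f_R0 (fun n => / (INR n + q) ^ 2) m <= / (q - 1) - / (INR m + q).
Proof.
  intros Hq. induction m as [|m IH].
  - simpl. rewrite Rplus_0_l. replace (q * (q * 1)) with (q ^ 2) by ring. apply inv_sq_le; auto.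
  - rewrite tech5. assert (H := inv_sq_le (INR (S m) + q) ltac:(generalize (pos_INR (S m)); lra)).
    replace (INR (S m) + q - 1) with (INR m + q) in H by (rewrite S_INR; ring). lra.
Qed.

Lemma eps_le a b : (forall eps : posreal, a <= b + 2 * eps) -> a <= b.
Proof.
  intros H. destruct (Rle_or_lt a b) as [Hab|Hab]; auto.
  assert (Hp : 0 < (a - b) / 4) by lra.
  specialize (H (mkposreal _ Hp)). simpl in H. lra.
Qed.

Lemma CE_pos l M : 0 <= CE l M.
Proof.
  unfold CE. apply Rmult_le_pos. apply Rmult_le_pos. lra.
  apply cond_pos_sum. intros k. apply Rmult_le_pos. apply Rabs_pos.
  left; apply Rinv_0_lt_compat, INR_fact_lt_0.
  apply KG_pos.
Qed.

Lemma sum_e_bound l M q m : 2 <= q ->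
  sum_f_R0 (fun n => Rabs ((-1) ^ n * (Gd l 0 (INR n + q) - PM l (S M) (INR n + q)
                                        - PM l (S M) (INR n + q + 1)))) m
  <= 2 * CE l (S M) / q ^ (S M).
Proof.
  intros Hq.
  assert (HC := CE_pos l (S M)).
  assert (HqM : 0 < q ^ M) by (apply pow_lt; lra).
  apply Rle_trans with (sum_f_R0 (fun n => / (INR n + q) ^ 2 * (CE l (S M) / q ^ M)) m).
  - apply sum_Rle. intros n _. rewrite Rabs_mult, pow_1_abs, Rmult_1_l.
    rewrite Rmult_comm.
    assert (Hn : 1 <= INR n + q) by (generalize (pos_INR n); lra).
    eapply Rle_trans. apply e_bound; auto; lia.
    replace (S M + 1)%nat with (M + 2)%nat by lia. rewrite pow_add.
    unfold Rdiv. rewrite Rinv_mult, Rmult_assoc. apply Rmult_le_compat_l; auto.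
    apply Rmult_le_compat_r. left; apply Rinv_0_lt_compat, pow_lt; lra.
    apply Rinv_le_contravar; auto. apply pow_incr. generalize (pos_INR n); lra.
  - rewrite <- scal_sum. 
    apply Rle_trans with (CE l (S M) / q ^ M * / (q - 1)).
    + apply Rmult_le_compat_l. unfold Rdiv; apply Rmult_le_pos; auto. left; apply Rinv_0_lt_compat; auto.
      eapply Rle_trans. apply inv_sq_sum; lra.
      assert (0 < / (INR m + q)) by (apply Rinv_0_lt_compat; generalize (pos_INR m); lra). lra.
    + simpl pow. unfold Rdiv. rewrite Rinv_mult.
      replace (2 * CE l (S M) * (/ q * / q ^ M)) with (CE l (S M) * / q ^ M * (2 * / q)) by ring.
      apply Rmult_le_compat_l. apply Rmult_le_pos; auto. left; apply Rinv_0_lt_compat; auto.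
      apply (Rmult_le_reg_r (q * (q - 1))). nra.
      replace (/ (q - 1) * (q * (q - 1))) with q by (field; lra).
      replace (2 * / q * (q * (q - 1))) with (2 * (q - 1)) by (field; lra). lra.
Qed.

Lemma mst_PM l M q : 2 * INR l + 1 <= ln q -> 2 <= q ->
  Rabs (mstieltjes l q - PM l (S M) q) <= 2 * CE l (S M) / q ^ (S M).
Proof.
  intros Hl Hq. apply eps_le. intros eps.
  destruct (series_part q l Hl eps) as [N1 HN1].
  set (CPv := CP l (S M)).
  destruct (nat_unbounded ((CPv / eps) ^ 2)) as [n0 Hn0].
  set (m := Nat.max N1 n0).
  assert (Hm1 : (N1 <= m)%nat) by lia.
  assert (Hm0 : INR n0 <= INR m) by (apply le_INR; lia).
  specialize (HN1 m Hm1).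
  set (y := INR (S m) + q).
  assert (Hy1 : 1 <= y) by (unfold y; generalize (pos_INR (S m)); lra).
  assert (HP : Rabs (PM l (S M) y) <= eps).
  { eapply Rle_trans. apply PM_bound; auto. fold CPv.
    assert (HCP : 0 <= CPv).
    { unfold CPv, CP. apply Rmult_le_pos. lra. apply cond_pos_sum. intros k.
      apply Rmult_le_pos. apply Rdiv_le_0_compat. apply Rabs_pos. apply INR_fact_lt_0. apply KG_pos. }
    assert (He := cond_pos eps).
    assert (Hsy : CPv / eps < sqrt y).
    { rewrite <- (sqrt_pow2 (CPv / eps)) by (apply Rdiv_le_0_compat; lra).
      apply sqrt_lt_1_alt. split. apply pow2_ge_0.
      unfold y. rewrite S_INR. lra. }
    assert (Hs0 : 0 < sqrt y) by (apply sqrt_lt_R0; lra).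
    apply (Rmult_le_reg_r (sqrt y)); auto. unfold Rdiv. rewrite Rmult_assoc, Rinv_l by lra.
    rewrite Rmult_1_r. apply (Rmult_lt_compat_l eps) in Hsy; auto.
    replace (eps * (CPv / eps)) with CPv in Hsy by (field; lra). lra. }
  assert (Ht := tele (fun n => Gd l 0 (INR n + q)) (fun n => PM l (S M) (INR n + q)) m).
  rewrite (sum_eq (fun n => (-1) ^ n * Gd l 0 (INR n + q))
     (fun n => (-1) ^ n * (ln (INR n + q) ^ l / (INR n + q)))) in Ht.
  2: { intros i _. rewrite Gd0. reflexivity. generalize (pos_INR i); lra. }
  rewrite (sum_eq (fun n => (-1) ^ n * (Gd l 0 (INR n + q) - PM l (S M) (INR n + q) - PM l (S M) (INR (S n) + q)))
     (fun n => (-1) ^ n * (Gd l 0 (INR n + q) - PM l (S M) (INR n + q) - PM l (S M) (INR n + q + 1)))) in Ht.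
  2: { intros i _. rewrite S_INR. replace (INR i + 1 + q) with (INR i + q + 1) by ring. reflexivity. }
  simpl INR in Ht at 2. rewrite Rplus_0_l in Ht. fold y in Ht.
  assert (Hs := sum_e_bound l M q m Hq).
  assert (Htr := sum_f_R0_triangle (fun n => (-1) ^ n * (Gd l 0 (INR n + q) - PM l (S M) (INR n + q)
                                        - PM l (S M) (INR n + q + 1))) m).
  assert (Hpy : Rabs ((-1) ^ S m * PM l (S M) y) <= eps).
  { rewrite Rabs_mult, pow_1_abs, Rmult_1_l. auto. }
  set (S1 := sum_f_R0 (fun n => (-1) ^ n * (ln (INR n + q) ^ l / (INR n + q))) m) in *.
  set (S2 := sum_f_R0 (fun n => (-1) ^ n * (Gd l 0 (INR n + q) - PM l (S M) (INR n + q)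
                                        - PM l (S M) (INR n + q + 1))) m) in *.
  replace (mstieltjes l q - PM l (S M) q) with
    (- (S1 - mstieltjes l q) + S2 - (-1) ^ S m * PM l (S M) y) by lra.
  eapply Rle_trans. apply Rabs_triang. eapply Rle_trans. apply Rplus_le_compat_r. apply Rabs_triang.
  rewrite Rabs_Ropp. rewrite Rabs_Ropp.
  lra.
Qed.

Definition AT l k := Rabs (euler_poly (2 * k + 1) 0 / (2 * INR (fact (2 * k + 1)))) *
  sum_f_R0 (fun j => Rabs (Binomial.C l j * INR (fact j) * stirling1 (2 * k + 2) (j + 1))) l.

Lemma AT_pos l k : 0 <= AT l k.
Proof. unfold AT. apply Rmult_le_pos. apply Rabs_pos. apply cond_pos_sum; intros; apply Rabs_pos. Qed.

Lemma term_bound l k q : 1 <= ln q -> 1 <= q ->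
  Rabs (asym_term l k q) <= AT l k * (ln q ^ l / q ^ (2 * k + 2)).
Proof.
  intros HL Hq. assert (Hqp : 0 < q ^ (2 * k + 2)) by (apply pow_lt; lra).
  unfold asym_term, AT.
  set (E := euler_poly (2 * k + 1) 0). set (F := INR (fact (2 * k + 1))).
  assert (HF : 0 < F) by apply INR_fact_lt_0.
  replace (E / (2 * q ^ (2 * k + 2) * F)) with (E / (2 * F) * / q ^ (2 * k + 2)) by (field; lra).
  set (Sm := sum_f_R0 (fun j => Binomial.C l j * INR (fact j) * stirling1 (2 * k + 2) (j + 1) * ln q ^ (l - j)) l).
  rewrite (Rabs_mult (E / (2 * F) * / q ^ (2 * k + 2)) Sm).
  rewrite (Rabs_mult (E / (2 * F)) (/ q ^ (2 * k + 2))).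
  rewrite (Rabs_right (/ q ^ (2 * k + 2))) by (left; apply Rinv_0_lt_compat; auto).
  replace (Rabs (E / (2 * F)) * sum_f_R0 (fun j => Rabs (Binomial.C l j * INR (fact j) * stirling1 (2 * k + 2) (j + 1))) l * (ln q ^ l / q ^ (2 * k + 2)))
    with (Rabs (E / (2 * F)) * / q ^ (2 * k + 2) * (sum_f_R0 (fun j => Rabs (Binomial.C l j * INR (fact j) * stirling1 (2 * k + 2) (j + 1))) l * ln q ^ l)) by (unfold Rdiv; ring).
  unfold Sm.
  apply Rmult_le_compat_l. apply Rmult_le_pos. apply Rabs_pos. left; apply Rinv_0_lt_compat; auto.
  eapply Rle_trans. apply sum_f_R0_triangle.
  rewrite (Rmult_comm _ (ln q ^ l)), scal_sum. apply sum_Rle. intros j Hj.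
  rewrite Rabs_mult. rewrite (Rabs_right (ln q ^ (l - j))) by (apply Rle_ge, pow_le; lra).
  apply Rmult_le_compat_l. apply Rabs_pos. apply Rle_pow; auto; lia.
Qed.

Theorem theorem3p17 (l N : nat) :
  exists (K Q : R), 0 < Q /\
    forall q : R, Q <= q ->
      Rabs (mstieltjes l q - asym_partial l N q)
        <= K * (ln q ^ l / q ^ (2 * N + 4)).
Proof.
  set (M := (2 * N + 4)%nat).
  exists (2 * CE l (S M) + AT l (S N) + AT l (S (S N))), (exp (2 * INR l + 2)).
  split. apply exp_pos. intros q Hq.
  assert (Hl0 := pos_INR l).
  assert (Hq3 : 3 <= q).
  { eapply Rle_trans. 2: exact Hq. eapply Rle_trans. 2: apply exp_ineq1_le. lra. }
  assert (HL : 2 * INR l + 2 <= ln q).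
  { rewrite <- (ln_exp (2 * INR l + 2)). apply ln_le; auto. apply exp_pos. }
  assert (HL1 : 1 <= ln q) by lra.
  assert (HPM := mst_PM l M q ltac:(lra) ltac:(lra)).
  assert (Hasym : asym_partial l (S (S N)) q = PM l (S M) q).
  { rewrite asym_PM by lra. f_equal. unfold M. lia. }
  cbn [asym_partial] in Hasym.
  assert (T1 := term_bound l (S N) q HL1 ltac:(lra)).
  assert (T2 := term_bound l (S (S N)) q HL1 ltac:(lra)).
  assert (HLl : 1 <= ln q ^ l) by (apply pow_R1_Rle; lra).
  assert (HqM : 0 < q ^ M) by (apply pow_lt; lra).
  assert (Hd1 : / q ^ (2 * S N + 2) <= / q ^ M).
  { apply Rinv_le_contravar; auto. apply Rle_pow; unfold M; lra || lia. }
  assert (Hd2 : / q ^ (2 * S (S N) + 2) <= / q ^ M).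
  { apply Rinv_le_contravar; auto. apply Rle_pow; unfold M; lra || lia. }
  assert (Hd3 : / q ^ (S M) <= / q ^ M).
  { apply Rinv_le_contravar; auto. apply Rle_pow; lra || lia. }
  assert (HC := CE_pos l (S M)). assert (HA1 := AT_pos l (S N)). assert (HA2 := AT_pos l (S (S N))).
  replace (mstieltjes l q - asym_partial l N q) with
    ((mstieltjes l q - PM l (S M) q) + asym_term l (S N) q + asym_term l (S (S N)) q) by lra.
  eapply Rle_trans. apply Rabs_triang. eapply Rle_trans. apply Rplus_le_compat_r. apply Rabs_triang.
  fold M. unfold Rdiv in *.
  assert (E1 : AT l (S N) * (ln q ^ l * / q ^ (2 * S N + 2)) <= AT l (S N) * (ln q ^ l * / q ^ M)).
  { apply Rmult_le_compat_l; auto. apply Rmult_le_compat_l; lra. }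
  assert (E2 : AT l (S (S N)) * (ln q ^ l * / q ^ (2 * S (S N) + 2)) <= AT l (S (S N)) * (ln q ^ l * / q ^ M)).
  { apply Rmult_le_compat_l; auto. apply Rmult_le_compat_l; lra. }
  assert (E3 : 2 * CE l (S M) * / q ^ S M <= 2 * CE l (S M) * (ln q ^ l * / q ^ M)).
  { apply Rmult_le_compat_l. lra. assert (0 < / q ^ M) by (apply Rinv_0_lt_compat; auto).
    nra. }
  nra.
Qed.
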